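(* Let $E$ be an sc-Banach space, $C$ a partial quadrant in $E$, and $N$ a finite-dimensional linear subspace of $E$ which is in good position to $C$. Then $C\cap N$ is a partial quadrant in $N$.
   Context: An sc-Banach space is a Banach space $E$ with a nested sequence of Banach spaces $E=E_0\supset E_1\supset\cdots$ with compact inclusions $E_n\to E_m$ ($m<n$) and $E_\infty=\bigcap E_m$ dense in each $E_m$; $\|\cdot\|$ is the norm of $E=E_0$. An sc-isomorphism is a linear bijection $T:E\to F$ such that $T$ and $T^{-1}$ are bounded and map each level continuously onto the corresponding level. A partial quadrant in $E$ is a closed subset $C$ such that some sc-isomorphism $T:E\to\mathbb R^n\oplus Q$ ($Q$ an sc-Banach space) maps $C$ onto $[0,\infty)^n\oplus Q$; a partial quadrant in a finite-dimensional space $N$ is the image of $[0,\infty)^k\oplus\mathbb R^{d-k}$ under a linear isomorphism $\mathbb R^d\to N$. An sc-complement of a closed subspace $N$ is a closed subspace $N^\perp$ with $E_m=(N\cap E_m)\oplus(N^\perp\cap E_m)$ topologically for every $m$, both pieces being sc-subspaces. A closed linear subspace $N$ of $E$ is in good position to $C$ if $N\cap C$ has nonempty interior in $N$ and there exist an sc-complement $N^\perp$ of $N$ and a constant $c>0$ such that for every $(n,m)\in N\oplus N^\perp$ with $\|m\|\le c\|n\|$ one has: $n+m\in C$ if and only if $n\in C$. *)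

(* Defs.v *)
From HB Require Import structures.
From mathcomp Require Import all_boot all_order all_algebra.
From mathcomp Require Import all_classical all_reals all_analysis.
Set Implicit Arguments. Unset Strict Implicit. Unset Printing Implicit Defensive.
Import Order.TTheory GRing.Theory Num.Theory.
Import numFieldNormedType.Exports.
Local Open Scope classical_set_scope.
Local Open Scope ring_scope.

Section Defs.
Variable R : realType.

Definition lin_subspace (V : lmodType R) (F : set V) : Prop :=
  F 0 /\ forall (a : R) (x y : V), F x -> F y -> F (a *: x + y).

Definition is_linear (V W : lmodType R) (T : V -> W) : Prop :=
  forall (a : R) (x y : V), T (a *: x + y) = a *: T x + T y.

Definition norm_on (V : lmodType R) (F : set V) (nrm : V -> R) : Prop :=
  [/\ forall x, F x -> 0 <= nrm x,
      forall x, F x -> nrm x = 0 -> x = 0,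
      forall (a : R) x, F x -> nrm (a *: x) = `|a| * nrm x
    & forall x y, F x -> F y -> nrm (x + y) <= nrm x + nrm y].

Definition nrm_cvg (V : lmodType R) (nrm : V -> R) (u : nat -> V) (l : V) : Prop :=
  forall e : R, 0 < e -> exists K : nat, forall i, (K <= i)%N -> nrm (u i - l) < e.

Definition nrm_cauchy (V : lmodType R) (nrm : V -> R) (u : nat -> V) : Prop :=
  forall e : R, 0 < e -> exists K : nat,
    forall i j, (K <= i)%N -> (K <= j)%N -> nrm (u i - u j) < e.

Definition banach_on (V : lmodType R) (F : set V) (nrm : V -> R) : Prop :=
  [/\ lin_subspace F, norm_on F nrm &
      forall u : nat -> V, (forall i, F (u i)) -> nrm_cauchy nrm u ->
        exists l, F l /\ nrm_cvg nrm u l].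

(* Compactness of the inclusion is expressed sequentially (bounded sequences
   in E_n have a subsequence converging in E_m), which is the definition of a
   compact operator between Banach (metric) spaces. *)
Definition sc_filtration (V : lmodType R) (lev : nat -> set V)
    (nrm : nat -> V -> R) : Prop :=
  [/\ forall m, banach_on (lev m) (nrm m),
      forall m, lev m.+1 `<=` lev m,
      forall m n, (m < n)%N -> forall u : nat -> V,
        (forall i, lev n (u i)) -> (exists B : R, forall i, nrm n (u i) <= B) ->
        exists phi : nat -> nat, (forall i, (phi i < phi i.+1)%N) /\
          exists l, lev m l /\ nrm_cvg (nrm m) (u \o phi) l
    & forall m x, lev m x -> forall e : R, 0 < e ->
        exists y, (forall k, lev k y) /\ nrm m (x - y) < e].

Definition sc_structure (V : lmodType R) (lev : nat -> set V)
    (nrm : nat -> V -> R) : Prop :=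
  lev 0%N = setT /\ sc_filtration lev nrm.

Definition sc_Banach (E : completeNormedModType R) (lev : nat -> set E)
    (nrm : nat -> E -> R) : Prop :=
  sc_structure lev nrm /\ forall x : E, nrm 0%N x = `|x|.

Definition sc_iso (V W : lmodType R) (levV : nat -> set V) (nrmV : nat -> V -> R)
    (levW : nat -> set W) (nrmW : nat -> W -> R) (T : V -> W) : Prop :=
  [/\ is_linear T, bijective T,
      forall m x, levV m x <-> levW m (T x),
      forall m, exists c : R, forall x, levV m x -> nrmW m (T x) <= c * nrmV m x
    & forall m, exists c : R, forall x, levV m x -> nrmV m x <= c * nrmW m (T x)].

Definition prod_lev (n : nat) (Q : lmodType R) (levQ : nat -> set Q) :
    nat -> set ('rV[R]_n * Q)%type :=
  fun m => [set p | levQ m p.2].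

Definition prod_nrm (n : nat) (Q : lmodType R) (nrmQ : nat -> Q -> R) :
    nat -> ('rV[R]_n * Q)%type -> R :=
  fun m p => \sum_(i < n) `|p.1 ord0 i| + nrmQ m p.2.

Definition partial_quadrant (E : completeNormedModType R) (lev : nat -> set E)
    (nrm : nat -> E -> R) (C : set E) : Prop :=
  closed C /\
  exists (n : nat) (Q : lmodType R) (levQ : nat -> set Q) (nrmQ : nat -> Q -> R)
         (T : E -> ('rV[R]_n * Q)%type),
    [/\ sc_structure levQ nrmQ,
        sc_iso lev nrm (prod_lev (n:=n) levQ) (prod_nrm (n:=n) nrmQ) T
      & T @` C = [set p : ('rV[R]_n * Q)%type | forall i : 'I_n, 0 <= p.1 ord0 i]].

Definition findim_subspace (E : lmodType R) (N : set E) : Prop :=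
  lin_subspace N /\
  exists (d : nat) (f : 'rV[R]_d -> E), is_linear f /\ range f = N.

Definition findim_partial_quadrant (E : lmodType R) (N D : set E) : Prop :=
  exists (d k : nat) (L : 'rV[R]_d -> E),
    [/\ (k <= d)%N, is_linear L, injective L, range L = N
      & L @` [set v : 'rV[R]_d | forall i : 'I_d, (i < k)%N -> 0 <= v ord0 i] = D].

Definition sc_subspace (E : completeNormedModType R) (lev : nat -> set E)
    (nrm : nat -> E -> R) (F : set E) : Prop :=
  [/\ lin_subspace F, closed F & sc_filtration (fun m => F `&` lev m) nrm].

Definition sc_complement (E : completeNormedModType R) (lev : nat -> set E)
    (nrm : nat -> E -> R) (N P : set E) : Prop :=
  [/\ sc_subspace lev nrm N, sc_subspace lev nrm P &
      forall m,
      [/\ forall x, lev m x -> exists a b, [/\ N a, lev m a, P b, lev m b & x = a + b],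
          forall z, N z -> P z -> lev m z -> z = 0
        & exists c : R, forall a b, N a -> lev m a -> P b -> lev m b ->
            nrm m a <= c * nrm m (a + b)]].

Definition good_position (E : completeNormedModType R) (lev : nat -> set E)
    (nrm : nat -> E -> R) (N C : set E) : Prop :=
  [/\ lin_subspace N, closed N,
      (exists x, [/\ N x, C x & exists e : R, 0 < e /\
          forall y, N y -> `|y - x| < e -> C y])
    & exists (P : set E) (c : R), [/\ sc_complement lev nrm N P, 0 < c &
        forall n m, N n -> P m -> `|m| <= c * `|n| -> (C (n + m) <-> C n)]].

End Defs.

(* Main.v *)
Require Import Defs.
From HB Require Import structures.
From mathcomp Require Import all_boot all_order all_algebra.
From mathcomp Require Import all_classical all_reals all_analysis.
From mathcomp Require Import ring lra.
Set Implicit Arguments. Unset Strict Implicit. Unset Printing Implicit Defensive.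
Import Order.TTheory GRing.Theory Num.Theory.
Import numFieldNormedType.Exports.
Local Open Scope classical_set_scope.
Local Open Scope ring_scope.
Section Aux.
Variable R : realType.
Lemma lin0 (V W : lmodType R) (f : V -> W) : is_linear f -> f 0 = 0.
Proof. move=> H; have e := H 1 0 0; rewrite !scale1r addr0 in e.
by apply: (addrI (f 0)); rewrite addr0 -e. Qed.
Lemma linD (V W : lmodType R) (f : V -> W) : is_linear f -> forall x y, f (x + y) = f x + f y.
Proof. by move=> H x y; have := H 1 x y; rewrite !scale1r. Qed.
Lemma linZ (V W : lmodType R) (f : V -> W) : is_linear f -> forall a x, f (a *: x) = a *: f x.
Proof. by move=> H a x; rewrite -[a *: x]addr0 H lin0 // addr0. Qed.
Lemma linB (V W : lmodType R) (f : V -> W) : is_linear f -> forall x y, f (x - y) = f x - f y.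
Proof. by move=> H x y; rewrite linD // -scaleN1r linZ // scaleN1r. Qed.
Lemma lin_sum (V W : lmodType R) (f : V -> W) k (F : 'I_k -> V) : is_linear f ->
  f (\sum_(i < k) F i) = \sum_(i < k) f (F i).
Proof. by move=> H; apply: (big_morph f (linD H) (lin0 H)). Qed.
Goal forall (n : nat) (Q : lmodType R) (p q : ('rV[R]_n * Q)%type) a i, (a *: p + q).1 ord0 i = a * p.1 ord0 i + q.1 ord0 i.
move=> n Q p q a i /=. by rewrite !mxE. Qed.
End Aux.
Lemma half_aux (F : realFieldType) (e A : F) : 0 < A -> e / (2 * A) * A = e / 2.
Proof. by move=> A0; field; rewrite ?gt_eqF. Qed.

Section Red.
Variable R : realType.
Definition ins d (j : 'I_d.+1) (u : 'rV[R]_d) : 'rV[R]_d.+1 :=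
  \row_k (if unlift j k is Some i then u ord0 i else 0).

Lemma reduce_inj (V : lmodType R) d (f : 'rV[R]_d -> V) : is_linear f ->
  exists d' (h : 'rV[R]_d' -> V), [/\ is_linear h, injective h & range h = range f].
Proof.
elim: d f => [|d IH] f fl.
  exists 0%N, f; split=> // u w _; by rewrite [u]thinmx0 [w]thinmx0.
case: (pselect (injective f)) => [finj|fninj]; first by exists d.+1, f.
have [u [w [fuw uw]]] : exists u w, f u = f w /\ u <> w.
  apply: contrapT => H; apply: fninj => u w fuw; apply: contrapT => uw; apply: H; by exists u, w.
set v := u - w.
have fv : f v = 0 by rewrite linB // fuw subrr.
have [j vj] : exists j, v ord0 j != 0.
  apply: contrapT=> H; apply: uw; apply/eqP; rewrite -subr_eq0; apply/eqP/rowP=> j.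
  rewrite [RHS]mxE; apply: contrapT=> Hj; apply: H; exists j; exact/eqP.
pose g u := f (ins j u).
have gl : is_linear g.
  move=> a x y; rewrite /g -fl; congr f; apply/rowP=> k; rewrite !mxE.
  by case: unliftP => [i _|_]; rewrite ?mxE // mulr0 addr0.
have [d' [h [hl hi hr]]] := IH g gl.
exists d', h; split=> //; rewrite hr.
apply/seteqP; split=> x [y _ <-]; first by exists (ins j y).
set y' := y - (y ord0 j / v ord0 j) *: v.
exists (\row_i y' ord0 (lift j i)) => //; rewrite /g.
have -> : ins j (\row_i y' ord0 (lift j i)) = y'.
  apply/rowP => k; rewrite !mxE; case: unliftP => [i ->|->]; rewrite ?mxE //.
  have vj' : u ord0 j - w ord0 j != 0 by move: vj; rewrite /v !mxE.
  by rewrite divfK // subrr.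
by rewrite /y' linB // linZ // fv scaler0 subr0.
Qed.
End Red.
Section Build.
Variable R : realType.
Lemma lin_comp (U V W : lmodType R) (f : U -> V) (g : V -> W) :
  is_linear f -> is_linear g -> is_linear (g \o f).
Proof. by move=> fl gl a x y /=; rewrite fl gl. Qed.

Section LS.
Variables (E : lmodType R) (N : set E) (Ns : lin_subspace N).
Lemma ls0 : N 0. Proof. by case: Ns. Qed.
Lemma lsD x y : N x -> N y -> N (x + y).
Proof. by case: Ns => _ H Nx Ny; have := H 1 x y Nx Ny; rewrite scale1r. Qed.
Lemma lsZ a x : N x -> N (a *: x).
Proof. by case: Ns => N0 H Nx; have := H a x 0 Nx N0; rewrite addr0. Qed.
Lemma lsB x y : N x -> N y -> N (x - y).
Proof. by move=> Nx Ny; rewrite -scaleN1r; apply: lsD => //; apply: lsZ. Qed.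
Lemma lsSum k (F : 'I_k -> E) : (forall j, N (F j)) -> N (\sum_(j < k) F j).
Proof. by move=> H; apply: (big_ind N ls0 lsD) => j _. Qed.
End LS.

Lemma build (E : lmodType R) (N : set E) k (mu : 'I_k -> E -> R) (a : 'I_k -> E) :
  lin_subspace N -> (exists d (f : 'rV[R]_d -> E), is_linear f /\ range f = N) ->
  (forall j b x y, mu j (b *: x + y) = b * mu j x + mu j y) ->
  (forall j, N (a j)) -> (forall i j, mu i (a j) = (i == j)%:R) ->
  findim_partial_quadrant N [set x | N x /\ forall j, 0 <= mu j x].
Proof.
move=> Ns [d [f [fl fr]]] mul Na mua.
have muD j x y : mu j (x + y) = mu j x + mu j y by have := mul j 1 x y; rewrite scale1r mul1r.
have mu0 j : mu j 0 = 0.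
  by apply: (addrI (mu j 0)); rewrite -muD !addr0.
have muZ j b x : mu j (b *: x) = b * mu j x by rewrite -[b *: x]addr0 mul mu0 addr0.
have muB j x y : mu j (x - y) = mu j x - mu j y by rewrite muD -scaleN1r muZ mulN1r.
have muS i (F : 'I_k -> E) : mu i (\sum_(j < k) F j) = \sum_(j < k) mu i (F j).
  exact: (big_morph (mu i) (muD i) (mu0 i)).
have muA i (c : 'I_k -> R) : mu i (\sum_(j < k) c j *: a j) = c i.
  rewrite muS (bigD1 i) //= muZ mua eqxx mulr1 big1 ?addr0 // => j ji.
  by rewrite muZ mua eq_sym (negbTE ji) mulr0.
pose g x := x - \sum_(j < k) mu j x *: a j.
have gl : is_linear g.
  move=> b x y; rewrite /g.
  under eq_bigr => j _ do rewrite mul scalerDl -scalerA.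
  by rewrite big_split -scaler_sumr /= scalerBr opprD addrACA.
have gN x : N x -> N (g x).
  by move=> Nx; apply: lsB => //; apply: lsSum => // j; apply: lsZ.
have mug i x : mu i (g x) = 0 by rewrite muB muA subrr.
have gid x : (forall j, mu j x = 0) -> g x = x.
  by move=> H; rewrite /g big1 ?subr0 // => j _; rewrite H scale0r.
have [d' [h [hl hi hr]]] := reduce_inj (lin_comp fl gl).
have hN w : N (h w) /\ forall j, mu j (h w) = 0.
  have : range h (h w) by exists w.
  rewrite hr => -[u _ <-] /=; split; last by move=> j; apply: mug.
  by apply: gN; rewrite -fr; exists u.
have hsur x : N x -> exists w, h w = g x.
  move=> Nx; have : range h (g x).
    by rewrite hr; rewrite -fr in Nx; case: Nx => u _ <-; exists u.
  by case=> w _ <-; exists w.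
pose L (u : 'rV[R]_(k + d')) := \sum_(j < k) u ord0 (lshift d' j) *: a j + h (rsubmx u).
have muL i u : mu i (L u) = u ord0 (lshift d' i).
  by rewrite muD muA (proj2 (hN _)) addr0.
have LN u : N (L u).
  apply: lsD => //; last by case: (hN (rsubmx u)).
  by apply: lsSum => // j; apply: lsZ.
have Lsur x : N x -> exists u, L u = x /\ forall j, u ord0 (lshift d' j) = mu j x.
  move=> Nx; have [w hw] := hsur x Nx.
  exists (row_mx (\row_j mu j x) w); split; last by move=> j; rewrite row_mxEl mxE.
  rewrite /L row_mxKr hw /g.
  under eq_bigr => j _ do rewrite row_mxEl mxE.
  by rewrite addrC subrK.
exists (k + d')%N, k, L; split.
- exact: leq_addr.
- move=> b u v; rewrite /L.
  have -> : rsubmx (b *: u + v) = b *: rsubmx u + rsubmx v by apply/rowP => i; rewrite !mxE.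
  rewrite hl.
  under eq_bigr => j _ do rewrite !mxE scalerDl -scalerA.
  by rewrite big_split -scaler_sumr /= scalerDr addrACA.
- move=> u v Luv.
  have el : lsubmx u = lsubmx v.
    by apply/rowP => i; rewrite !mxE -muL Luv muL.
  have er : rsubmx u = rsubmx v.
    apply: hi; move: Luv; rewrite /L.
    have -> : \sum_(j < k) u ord0 (lshift d' j) *: a j = \sum_(j < k) v ord0 (lshift d' j) *: a j.
      apply: eq_bigr => j _; congr (_ *: _).
      by have := congr1 (fun M : 'rV[R]_k => M ord0 j) el; rewrite !mxE.
    exact: addrI.
  by rewrite -[u]hsubmxK -[v]hsubmxK el er.
- apply/seteqP; split=> x; first by case=> u _ <-.
  by move=> Nx; have [u [<- _]] := Lsur x Nx; exists u.
- apply/seteqP; split=> x.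
    case=> u Hu <-; split=> // j; rewrite muL; apply: Hu; by rewrite /= ltn_ord.
  case=> Nx Hx; have [u [Lu Hu]] := Lsur x Nx; exists u => //.
  move=> i ik; have -> : i = lshift d' (Ordinal ik) by apply: val_inj.
  by rewrite Hu.
Qed.
End Build.

Theorem proposition6p1 (R : realType) (E : completeNormedModType R)
    (lev : nat -> set E) (nrm : nat -> E -> R) (C N : set E) :
  sc_Banach lev nrm ->
  partial_quadrant lev nrm C ->
  findim_subspace N ->
  good_position lev nrm N C ->
  findim_partial_quadrant N (C `&` N).
Proof.
move=> [[lev0 _] _] [_ [nq [Q [levQ [nrmQ [T [_ [Tl Tb _ _ _] TC]]]]]]].
move=> [Ns Nfin] [_ _ [x0 [Nx0 Cx0 [e [e0 He]]]] [P [c [[_ [Ps _ _] Hcomp] c0 Hgp]]]].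
pose lam i x := (T x).1 ord0 i.
have lamL i b x y : lam i (b *: x + y) = b * lam i x + lam i y by rewrite /lam Tl /= !mxE.
have lamD i x y : lam i (x + y) = lam i x + lam i y by have := lamL i 1 x y; rewrite scale1r mul1r.
have lam0 i : lam i 0 = 0 by apply: (addrI (lam i 0)); rewrite -lamD !addr0.
have lamZ i b x : lam i (b *: x) = b * lam i x by rewrite -[b *: x]addr0 lamL lam0 addr0.
have lamB i x y : lam i (x - y) = lam i x - lam i y by rewrite lamD -scaleN1r lamZ mulN1r.
have Cdef x : C x <-> forall i, 0 <= lam i x.
  split=> [Cx|H].
    have : [set p : ('rV[R]_nq * Q)%type | forall i : 'I_nq, 0 <= p.1 ord0 i] (T x).
      by rewrite -TC; exists x.
    by [].
  have : (T @` C) (T x) by rewrite TC.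
  by case=> y Cy /(bij_inj Tb) <-.
have Ccone s x : 0 <= s -> C x -> C (s *: x).
  by move=> s0 /Cdef Cx; apply/Cdef => i; rewrite lamZ mulr_ge0.
have C0 : C 0 by apply/Cdef => i; rewrite lam0.
have F1 j y : ~ (forall m, P m -> lam j m = 0) -> N y -> C y -> lam j y = 0 -> y = 0.
  move=> hj Ny Cy ly; apply: contrapT => /eqP y0.
  have [m [Pm lm]] : exists m, P m /\ lam j m != 0.
    apply: contrapT => H; apply: hj => m Pm; apply: contrapT => lm; apply: H.
    by exists m; split => //; apply/eqP.
  pose m2 := (- lam j m) *: m.
  have Pm2 : P m2 by apply: (lsZ Ps).
  have lm2 : lam j m2 < 0 by rewrite lamZ mulNr oppr_lt0 -expr2 exprn_even_gt0.
  have m20 : m2 != 0 by apply/eqP => H; move: lm2; rewrite H lam0 ltxx.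
  have ny : 0 < `|y| by rewrite normr_gt0.
  have nm2 : 0 < `|m2| by rewrite normr_gt0.
  pose t := c * `|y| / `|m2|.
  have t0 : 0 < t by rewrite /t divr_gt0 // mulr_gt0.
  have Pm3 : P (t *: m2) by apply: (lsZ Ps).
  have Hle : `|t *: m2| <= c * `|y| by rewrite normrZ gtr0_norm // /t divfK ?gt_eqF.
  have := (Hgp y _ Ny Pm3 Hle).2 Cy => /Cdef /(_ j).
  by rewrite lamD ly add0r lamZ pmulr_rge0 // leNgt lm2.
pose I0 := [set i : 'I_nq | `[< forall m, P m -> lam i m = 0 >]]%SET.
have I0P i : reflect (forall m, P m -> lam i m = 0) (i \in I0) by rewrite inE; apply: asboolP.
have [dec _ _] := Hcomp 0%N.
have Ha : forall j : 'I_#|I0|, exists aj, N aj /\ forall i, i \in I0 -> lam i aj = (i == enum_val j)%:R.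
  move=> j; have [w Tw] : exists w, T w = (delta_mx 0 (enum_val j), 0).
    by case: Tb => g Tg gT; exists (g (delta_mx 0 (enum_val j), 0)); apply: gT.
  have [a' [b [Na _ Pb _ wab]]] := dec w (ltac:(by rewrite lev0)).
  exists a'; split=> // i /I0P Hi.
  have : lam i w = (i == enum_val j)%:R by rewrite /lam Tw /= mxE eqxx.
  by rewrite wab lamD (Hi b Pb) addr0.
case: (choice Ha) => a Ha'.
case: (pselect (forall x, N x -> (forall i, i \in I0 -> 0 <= lam i x) -> C x)) => [Hc|Hc].
  have -> : C `&` N = [set x | N x /\ forall j : 'I_#|I0|, 0 <= lam (enum_val j) x].
    apply/seteqP; split => x.
      by case=> /Cdef Cx Nx; split.
    case=> Nx Hx; split=> //; apply: Hc => // i iI0.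
    by rewrite -(enum_rankK_in iI0 iI0); apply: Hx.
  apply: (build (mu := fun j => lam (enum_val j)) (a := a)) => //.
  - by move=> j; exact: (Ha' j).1.
  - by move=> i j; rewrite (Ha' j).2 ?enum_valP // (inj_eq enum_val_inj).
have [nn [Nnn Hnn Cnn]] : exists nn, [/\ N nn, (forall i, i \in I0 -> 0 <= lam i nn) & ~ C nn].
  apply: contrapT => H; apply: Hc => x Nx Hx; apply: contrapT => Cx; apply: H; by exists x.
have nn0 : nn != 0 by apply/eqP => H; apply: Cnn; rewrite H.
have Cpos s x : 0 < s -> x = s *: nn -> C x -> False.
  move=> sp -> Cx; apply: Cnn.
  have -> : nn = s^-1 *: (s *: nn) by rewrite scalerK // gt_eqF.
  by apply: Ccone => //; rewrite invr_ge0 ltW.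
case: (pselect (exists a', N a' /\ forall t, a' <> t *: nn)) => [[a' [Na' Ha'']]|Hsp].
  exfalso.
  have [x1 [Nx1 Cx1 Hx1]] : exists x1, [/\ N x1, C x1 & forall t, x1 <> t *: nn].
    case: (pselect (exists t0, x0 = t0 *: nn)) => [[t0 Ht0]|Hx0]; last first.
      by exists x0; split=> // t Ht; apply: Hx0; exists t.
    pose dl := e / (2 * (`|a'| + 1)).
    have na := normr_ge0 a'.
    have pa : 0 < `|a'| + 1 by lra.
    have dl0 : 0 < dl by rewrite /dl divr_gt0 // mulr_gt0.
    have dle : dl * (`|a'| + 1) = e / 2 by rewrite /dl half_aux.
    exists (x0 + dl *: a'); split.
    - by apply: (lsD Ns) => //; apply: (lsZ Ns).
    - apply: He; first by apply: (lsD Ns) => //; apply: (lsZ Ns).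
      rewrite addrAC subrr add0r normrZ gtr0_norm //.
      have : dl * `|a'| <= dl * (`|a'| + 1) by rewrite mulrDr mulr1 lerDl ltW.
      lra.
    - move=> t Ht; apply: (Ha'' ((t - t0) / dl)).
      apply: (scalerI (negbT (gt_eqF dl0))); rewrite scalerA mulrC divfK ?gt_eqF //.
      by rewrite scalerBl -Ht -Ht0 addrAC subrr add0r.
  have [j0 j0n] : exists j0, lam j0 nn < 0.
    apply: contrapT => H; apply: Cnn; apply/Cdef => i; rewrite leNgt; apply/negP => Hi.
    by apply: H; exists i.
  pose tt j := lam j x1 / (lam j x1 - lam j nn).
  case: (Order.TotalTheory.arg_minP tt (P := fun j => lam j nn < 0) j0n) => js jsn Hmin.
  have Cx1' := (Cdef x1).1 Cx1.
  have D j : lam j nn < 0 -> 0 < lam j x1 - lam j nn.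
    by move=> H; have := Cx1' j; lra.
  have ttD j : lam j nn < 0 -> tt j * (lam j x1 - lam j nn) = lam j x1.
    by move=> H; rewrite /tt divfK // gt_eqF // D.
  set ts := tt js.
  have ts0 : 0 <= ts by rewrite /ts /tt divr_ge0 // ltW // D.
  have tsD := ttD js jsn; rewrite -/ts in tsD.
  have Djs := D js jsn.
  have ts1 : ts < 1 by nra.
  pose p := (1 - ts) *: x1 + ts *: nn.
  have lp i : lam i p = (1 - ts) * lam i x1 + ts * lam i nn by rewrite /p lamL lamZ.
  have Cp : C p.
    apply/Cdef => i; rewrite lp; have := Cx1' i.
    case: (ltP (lam i nn) 0) => Hi Hx.
      have := Hmin i Hi; have := ttD i Hi; have := D i Hi; rewrite -/ts; nra.
    nra.
  have Np : N p by apply: (lsD Ns); apply: (lsZ Ns).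
  have lpjs : lam js p = 0 by rewrite lp; nra.
  have nI0 : ~ (forall m, P m -> lam js m = 0).
    move=> H; have := Hnn js (ltac:(by apply/I0P)); by rewrite leNgt jsn.
  have p0 := F1 js p nI0 Np Cp lpjs.
  apply: (Hx1 (- (ts / (1 - ts)))).
  have ts1' : 1 - ts != 0 by rewrite gt_eqF // subr_gt0.
  apply: (scalerI ts1'); rewrite scalerA mulrN mulrC divfK // scaleNr.
  by apply/eqP; rewrite -addr_eq0 -/p p0.
have Hsp' a' : N a' -> exists t, a' = t *: nn.
  move=> Na'; apply: contrapT => H; apply: Hsp; exists a'; split=> // t Ht; apply: H; by exists t.
have [t0 Ht0] := Hsp' x0 Nx0.
have t0le : t0 <= 0.
  by rewrite leNgt; apply/negP => t0p; apply: (Cpos t0 x0).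
pose dl := e / (2 * (`|nn| + 1)).
have na := normr_ge0 nn.
have pa : 0 < `|nn| + 1 by lra.
have dl0 : 0 < dl by rewrite /dl divr_gt0 // mulr_gt0.
have dle : dl * (`|nn| + 1) = e / 2 by rewrite /dl half_aux.
pose w := x0 - dl *: nn.
pose tau := t0 - dl.
have wt : w = tau *: nn by rewrite /w Ht0 scalerBl.
have Nw : N w by apply: (lsB Ns) => //; apply: (lsZ Ns).
have Cw : C w.
  apply: He => //; rewrite /w addrAC subrr add0r normrN normrZ gtr0_norm //.
  have : dl * `|nn| <= dl * (`|nn| + 1) by rewrite mulrDr mulr1 lerDl ltW.
  lra.
have tau0 : tau < 0 by rewrite /tau; lra.
have tau0' : tau != 0 by rewrite lt_eqF.
have w0 : w != 0 by rewrite wt scaler_eq0 negb_or tau0' nn0.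
exists 1%N, 1%N, (fun u : 'rV[R]_1 => u ord0 ord0 *: w); split => //.
- by move=> b u v; rewrite !mxE scalerDl scalerA.
- move=> u v /eqP; rewrite -subr_eq0 -scalerBl scaler_eq0 (negbTE w0) orbF subr_eq0 => /eqP H.
  by apply/rowP => i; rewrite (ord1 i).
- apply/seteqP; split=> x; first by case=> u _ <-; apply: (lsZ Ns).
  move=> Nx; have [t Ht] := Hsp' x Nx; exists (const_mx (t / tau)) => //.
  by rewrite mxE Ht wt scalerA divfK.
- apply/seteqP; split=> x.
    by case=> u Hu <-; split; [apply: Ccone => //; apply: (Hu ord0) | apply: (lsZ Ns)].
  case=> Cx Nx; have [t Ht] := Hsp' x Nx.
  have tle : t <= 0 by rewrite leNgt; apply/negP => tp; apply: (Cpos t x).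
  exists (const_mx (t / tau)).
    by move=> i _; rewrite mxE mulr_le0 // invr_le0 ltW.
  by rewrite mxE Ht wt scalerA divfK.
Qed.
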